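(* In the linear deterministic diamond network with a disturbing node with gains $n_1,n_2,n_3,n_4,m$, suppose $n_1>n_2$, $n_4\ge n_3$ and $m\le n_2$. Then the linear capacity is $C=\min(n_1,\ n_4,\ n_2+n_3-m)$.
   Context: The shift matrix $Q$ is the $q\times q$ matrix over $\mathbb{F}_2$ with $Q_{i+1,i}=1$ for $1\le i\le q-1$ and all other entries $0$, where $q=\max(n_1,n_2,n_3,n_4,m)$ and all gains are nonnegative integers. Network: source $S$, relays $A,B$, destination $D$, disturbing node $M$; gains $n_1$ ($S\to A$), $n_2$ ($S\to B$), $n_3$ ($A\to D$), $n_4$ ($B\to D$), $m$ ($M\to A$ and $M\to B$). Each node transmits $x_i\in\mathbb{F}_2^q$ and receives $y_j=\sum_{k:(k,j)\text{ an edge}}Q^{q-n_{(k,j)}}x_k$; relays use linear maps $x_A=G_Ay_A$, $x_B=G_By_B$ with $G_A,G_B$ arbitrary $q\times q$ matrices over $\mathbb{F}_2$. Then $y_D=G_Sx_S+G_Mx_M$ with $G_S=Q^{q-n_3}G_AQ^{q-n_1}+Q^{q-n_4}G_BQ^{q-n_2}$ and $G_M=Q^{q-n_3}G_AQ^{q-m}+Q^{q-n_4}G_BQ^{q-m}$. The rate $R(G_A,G_B)$ is the maximum dimension of a subspace $\mathcal{X}\subseteq\mathbb{F}_2^q$ such that for all $x_S,x_S'\in\mathcal{X}$, $x_M,x_M'\in\mathbb{F}_2^q$, $G_Sx_S+G_Mx_M=G_Sx_S'+G_Mx_M'$ implies $x_S=x_S'$. The linear capacity is $C=\max_{G_A,G_B}R(G_A,G_B)$.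 *)

(* Defs.v *)
From HB Require Import structures.
From mathcomp Require Import all_boot all_order all_algebra.
Set Implicit Arguments. Unset Strict Implicit. Unset Printing Implicit Defensive.
Import GRing.Theory.
Local Open Scope ring_scope.

Notation F2 := 'F_2.

Definition shiftQ (q : nat) : 'M[F2]_q :=
  \matrix_(i < q, j < q) (if (i : nat) == (j : nat).+1 then 1 else 0).

(* Q^k as an iterated matrix product (avoids needing a ring on 'M_0). *)
Definition Qpow (q k : nat) : 'M[F2]_q := iter k (mulmx (shiftQ q)) 1%:M.

Definition qdim (n1 n2 n3 n4 m : nat) : nat :=
  maxn n1 (maxn n2 (maxn n3 (maxn n4 m))).

Definition GS (q n1 n2 n3 n4 : nat) (GA GB : 'M[F2]_q) : 'M[F2]_q :=
  Qpow q (q - n3) *m GA *m Qpow q (q - n1) + Qpow q (q - n4) *m GB *m Qpow q (q - n2).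
Definition GM (q n3 n4 m : nat) (GA GB : 'M[F2]_q) : 'M[F2]_q :=
  Qpow q (q - n3) *m GA *m Qpow q (q - m) + Qpow q (q - n4) *m GB *m Qpow q (q - m).

Definition decodable (q n1 n2 n3 n4 m : nat) (GA GB : 'M[F2]_q)
    (X : {vspace 'cV[F2]_q}) : Prop :=
  forall xS xS' xM xM' : 'cV[F2]_q, xS \in X -> xS' \in X ->
    GS n1 n2 n3 n4 GA GB *m xS + GM n3 n4 m GA GB *m xM =
    GS n1 n2 n3 n4 GA GB *m xS' + GM n3 n4 m GA GB *m xM' -> xS = xS'.

Definition is_rate (q n1 n2 n3 n4 m : nat) (GA GB : 'M[F2]_q) (r : nat) : Prop :=
  (exists X, decodable n1 n2 n3 n4 m GA GB X /\ \dim X = r) /\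
  (forall X, decodable n1 n2 n3 n4 m GA GB X -> (\dim X <= r)%N).

Definition is_linear_capacity (n1 n2 n3 n4 m c : nat) : Prop :=
  let q := qdim n1 n2 n3 n4 m in
  (exists GA GB : 'M[F2]_q, is_rate n1 n2 n3 n4 m GA GB c) /\
  (forall (GA GB : 'M[F2]_q) (r : nat), is_rate n1 n2 n3 n4 m GA GB r -> (r <= c)%N).

(* Main.v *)
Require Import Defs.
From mathcomp Require Import all_boot all_order all_algebra.
From mathcomp Require Import zify.
Set Implicit Arguments. Unset Strict Implicit. Unset Printing Implicit Defensive.
Import GRing.Theory.
Local Open Scope ring_scope.

Definition get q (v : 'cV[F2]_q) (n : nat) : F2 :=
  if @insub nat (fun k => k < q)%N _ n is Some i then v i 0 else 0.

Lemma getE q (v : 'cV[F2]_q) (i : 'I_q) : get v i = v i 0.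
Proof. by rewrite /get valK. Qed.

Lemma get_out q (v : 'cV[F2]_q) n : (q <= n)%N -> get v n = 0.
Proof. by move=> h; rewrite /get insubN // -leqNgt. Qed.

Lemma get_inj q (v w : 'cV[F2]_q) : (forall n, (n < q)%N -> get v n = get w n) -> v = w.
Proof. move=> h; apply/matrixP => i j; rewrite (ord1 j) -!getE; exact: h. Qed.

Lemma getD q (v w : 'cV[F2]_q) n : get (v + w) n = get v n + get w n.
Proof. case: (ltnP n q) => h; last by rewrite !get_out // addr0.
by rewrite -[n]/(val (Ordinal h)) !getE mxE. Qed.

Lemma getB q (v w : 'cV[F2]_q) n : get (v - w) n = get v n - get w n.
Proof. case: (ltnP n q) => h; last by rewrite !get_out // subr0.
by rewrite -[n]/(val (Ordinal h)) !getE !mxE. Qed.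

Lemma get0 q n : get (0 : 'cV[F2]_q) n = 0.
Proof. case: (ltnP n q) => h; last by rewrite !get_out.
by rewrite -[n]/(val (Ordinal h)) !getE !mxE. Qed.

Lemma mulmx_sel p q (g : nat -> nat) (M : 'M[F2]_(p,q)) (v : 'cV[F2]_q) n :
  (forall (i : 'I_p) (j : 'I_q), M i j = ((j : nat) == g i)%:R) ->
  get (M *m v) n = if (n < p)%N then get v (g n) else 0.
Proof.
move=> hM; case: (ltnP n p) => hn; last by rewrite get_out.
rewrite -[n]/(val (Ordinal hn)) getE mxE.
case: (ltnP (g n) q) => hg.
  rewrite (bigD1 (Ordinal hg)) //= hM eqxx mul1r big1 ?addr0.
    by rewrite -[g n]/(nat_of_ord (Ordinal hg)) getE.
  move=> j hj; rewrite hM; case: eqP => [e|]; last by rewrite mul0r.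
  by case/eqP: hj; apply: val_inj.
rewrite get_out // big1 // => j _; rewrite hM.
case: eqP => [e|]; last by rewrite mul0r.
have := ltn_ord j; rewrite e /= => /leq_trans/(_ hg); by rewrite ltnn.
Qed.

Lemma shiftQ_get q (w : 'cV[F2]_q) n :
  get (shiftQ q *m w) n = if (1 <= n)%N && (n < q)%N then get w (n - 1) else 0.
Proof.
rewrite (@mulmx_sel _ _ (fun i => if i is i'.+1 then i' else q)).
  case: n => [|n] /=; first by rewrite get_out; case: (0 < q)%N.
  by rewrite subn1.
move=> i j; rewrite mxE; case: (nat_of_ord i) => [|i'] /=.
  by rewrite (ltn_eqF (ltn_ord j)).
by rewrite eqSS eq_sym; case: eqP.
Qed.

Lemma Qpow_get q k (v : 'cV[F2]_q) n :
  get (Qpow q k *m v) n = if (k <= n)%N && (n < q)%N then get v (n - k) else 0.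
Proof.
elim: k n => [|k IH] n.
  rewrite /Qpow /= mul1mx subn0; case: ltnP => // h; by rewrite get_out.
rewrite /Qpow /= -mulmxA -/(Qpow q k) shiftQ_get.
case: (ltnP n q) => hq; rewrite ?andbF //= andbT.
case: n hq => [|n] hq /=; first by [].
rewrite subn1 /= IH ltnS (ltnW hq) andbT subSS.
by [].
Qed.
Lemma F2_add_self (a : F2) : a + a = 0.
Proof. by case: a => [[|[|k]]] //= ?; apply/val_inj. Qed.

Section Constr.
Variables (q n1 n2 n3 n4 m : nat).
Hypotheses (h1 : (n1 <= q)%N) (h2 : (n2 < n1)%N) (h3 : (n3 <= n4)%N) (h4 : (n4 <= q)%N) (hm : (m <= n2)%N).

Definition tt0 := minn (n2 - m) (minn (n1 - n3) (n4 - n3)).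
Definition gB (i : nat) := if (i < tt0)%N then (i + (q - n2))%N
  else if (n4 - n3 <= i)%N then (i + (q - n4))%N else q.
Definition GA0 : 'M[F2]_q := \matrix_(i < q, j < q) ((j : nat) == i + (q - n3))%N%:R.
Definition GB0 : 'M[F2]_q := \matrix_(i < q, j < q) ((j : nat) == gB i)%:R.

Lemma GA0_get v n : get (GA0 *m v) n = if (n < q)%N then get v (n + (q - n3)) else 0.
Proof. by rewrite (@mulmx_sel _ _ (fun i => i + (q - n3))%N) // => i j; rewrite mxE. Qed.
Lemma GB0_get v n : get (GB0 *m v) n = if (n < q)%N then get v (gB n) else 0.
Proof. by rewrite (@mulmx_sel _ _ gB) // => i j; rewrite mxE. Qed.

Lemma GS_split n1' n2' n3' n4' (GA GB : 'M[F2]_q) x n :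
  get (GS n1' n2' n3' n4' GA GB *m x) n =
  get (Qpow q (q - n3') *m (GA *m (Qpow q (q - n1') *m x))) n +
  get (Qpow q (q - n4') *m (GB *m (Qpow q (q - n2') *m x))) n.
Proof. by rewrite /GS mulmxDl getD !mulmxA. Qed.

Lemma GM_split n3' n4' m' (GA GB : 'M[F2]_q) x n :
  get (GM n3' n4' m' GA GB *m x) n =
  get (Qpow q (q - n3') *m (GA *m (Qpow q (q - m') *m x))) n +
  get (Qpow q (q - n4') *m (GB *m (Qpow q (q - m') *m x))) n.
Proof. by rewrite /GM mulmxDl getD !mulmxA. Qed.


Lemma GM0 (x : 'cV[F2]_q) : GM n3 n4 m GA0 GB0 *m x = 0.
Proof.
apply: get_inj => n hn; rewrite get0 GM_split !Qpow_get !GA0_get !GB0_get hn /=.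
case: (leqP (q - n3) n) => a.
  have -> : (q - n4 <= n)%N by lia.
  rewrite /= !ifT; try lia.
  rewrite /gB ifF; last by rewrite /tt0; lia.
  rewrite ifT; last lia.
  have -> : (n - (q - n3) + (q - n3) = n)%N by lia.
  have -> : (n - (q - n4) + (q - n4) = n)%N by lia.
  by rewrite F2_add_self.
rewrite add0r; case: (leqP (q - n4) n) => b //=.
rewrite ifT; last lia.
rewrite /gB; case: ifP => c; last first.
  by rewrite ifF; last lia; rewrite get_out.
rewrite Qpow_get ifF //; rewrite /tt0 in c; lia.
Qed.

Definition GS0 := GS n1 n2 n3 n4 GA0 GB0.

Lemma GS_rowB (x : 'cV[F2]_q) k : (k < tt0)%N -> get (GS0 *m x) (q - n4 + k) = get x k.
Proof.
move=> hk; have hk' := hk; rewrite /tt0 in hk'.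
rewrite GS_split !Qpow_get ifF; last lia.
rewrite add0r ifT; last lia.
rewrite GB0_get ifT; last lia.
have -> : (q - n4 + k - (q - n4) = k)%N by lia.
rewrite /gB hk Qpow_get ifT; last lia.
by have -> : (k + (q - n2) - (q - n2) = k)%N by lia.
Qed.

Lemma GS_rowA (x : 'cV[F2]_q) i : (n1 - n3 <= i)%N -> (i < n1)%N ->
  get (GS0 *m x) (i + (q - n1)) =
  get x i + (if (n1 - n2 <= i)%N then get x (i - (n1 - n2)) else 0).
Proof.
move=> ha hb.
rewrite GS_split !Qpow_get ifT; last lia.
rewrite GA0_get ifT; last lia.
have -> : (i + (q - n1) - (q - n3) + (q - n3) = i + (q - n1))%N by lia.
rewrite Qpow_get ifT; last lia.
have -> : (i + (q - n1) - (q - n1) = i)%N by lia.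
rewrite ifT; last lia.
rewrite GB0_get ifT; last lia.
rewrite /gB ifF; last by rewrite /tt0; lia.
rewrite ifT; last lia.
have -> : (i + (q - n1) - (q - n4) + (q - n4) = i + (q - n1))%N by lia.
rewrite Qpow_get; congr (_ + _).
case: (leqP (n1 - n2) i) => c.
  rewrite ifT; last lia.
  by have -> : (i + (q - n1) - (q - n2) = i - (n1 - n2))%N by lia.
by rewrite ifF //; lia.
Qed.

Definition inJ i := (i < tt0)%N || ((n1 - n3 <= i)%N && (i < n1)%N).

Lemma GS0_inj (x : 'cV[F2]_q) : (forall i, ~~ inJ i -> get x i = 0) ->
  GS0 *m x = 0 -> x = 0.
Proof.
move=> hs h0; apply: get_inj => n _; rewrite get0; move: n.
elim/ltn_ind => i IH.
case hJ: (inJ i); last by apply: hs; rewrite hJ.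
case/orP: hJ => [hi|/andP [ha hb]].
  by rewrite -GS_rowB // h0 get0.
have := GS_rowA x ha hb; rewrite h0 get0.
case: ifP => c; last by rewrite addr0 => ->.
have hlt : (i - (n1 - n2) < i)%N by lia.
by rewrite (IH _ hlt) addr0 => ->.
Qed.
End Constr.

Lemma dim_bound q k (H : 'M[F2]_(k, q)) (X : {vspace 'cV[F2]_q}) :
  (forall x, x \in X -> H *m x = 0 -> x = 0) -> (\dim X <= k)%N.
Proof.
move=> hX; pose f := linfun (mulmx H : 'cV[F2]_q -> 'cV[F2]_k).
have e : (X :&: lker f)%VS = 0%VS.
  apply/eqP; rewrite -subv0; apply/subvP => x; rewrite memv_cap memv_ker memv0.
  case/andP => xX; rewrite lfunE /= => /eqP hx; apply/eqP; exact: hX.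
rewrite -(limg_dim_eq e).
have := dimvS (subvf (f @: X)); rewrite dimvf dim_matrix => h; exact: (leq_trans h (eq_leq (muln1 k))).
Qed.

Lemma dim_img q c (E : 'M[F2]_(q, c)) :
  (forall y : 'cV[F2]_c, E *m y = 0 -> y = 0) ->
  \dim (limg (linfun (mulmx E : 'cV[F2]_c -> 'cV[F2]_q))) = c.
Proof.
move=> hE; rewrite limg_dim_eq; first by rewrite dimvf dim_matrix; exact: muln1.
apply/eqP; rewrite -subv0; apply/subvP => y; rewrite memv_cap memv_ker memv0 lfunE /=.
by case/andP => _ /eqP /hE ->.
Qed.

Lemma mem_img q c (E : 'M[F2]_(q, c)) x :
  x \in limg (linfun (mulmx E : 'cV[F2]_c -> 'cV[F2]_q)) -> exists y, x = E *m y.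
Proof. by case/memv_imgP => y _ ->; exists y; rewrite lfunE. Qed.

Definition Trunc q k s : 'M[F2]_(k, q) := \matrix_(i < k, j < q) ((j : nat) == i + s)%N%:R.

Lemma Trunc_get q k s (v : 'cV[F2]_q) n :
  get (Trunc q k s *m v) n = if (n < k)%N then get v (n + s) else 0.
Proof. by rewrite (@mulmx_sel _ _ (fun i => i + s)%N) // => i j; rewrite mxE. Qed.

Lemma Trunc_zero q k s (v : 'cV[F2]_q) i : Trunc q k s *m v = 0 -> (i < k)%N -> get v (i + s) = 0.
Proof. by move=> h hi; have := Trunc_get k s v i; rewrite h get0 hi => <-. Qed.

Lemma Qpow_zero q k (v : 'cV[F2]_q) : (k <= q)%N ->
  (forall i, (i < k)%N -> get v i = 0) -> Qpow q (q - k) *m v = 0.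
Proof.
move=> hk h; apply: get_inj => n hn; rewrite get0 Qpow_get; case: ifP => // c.
apply: h; lia.
Qed.

Section UB.
Variables (q n1 n2 n3 n4 m : nat).
Hypotheses (h1 : (n1 <= q)%N) (h2 : (n2 < n1)%N) (h3 : (n3 <= n4)%N) (h4 : (n4 <= q)%N) (hm : (m <= n2)%N).
Variables (GA GB : 'M[F2]_q) (X : {vspace 'cV[F2]_q}).
Hypothesis hd : decodable n1 n2 n3 n4 m GA GB X.

Lemma dec0 x xM : x \in X -> GS n1 n2 n3 n4 GA GB *m x + GM n3 n4 m GA GB *m xM = 0 -> x = 0.
Proof.
move=> hx e; apply: (hd (xM := xM) (xM' := 0) hx (mem0v X)). by rewrite e !mulmx0 addr0.
Qed.

Lemma ub1 : (\dim X <= n1)%N.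
Proof.
apply: (@dim_bound _ _ (Trunc q n1 0)) => x hx hH; apply: (@dec0 x 0 hx).
rewrite mulmx0 addr0 /GS mulmxDl -!mulmxA.
rewrite (@Qpow_zero _ n1) ?(@Qpow_zero _ n2) ?mulmx0 ?addr0 //; try lia.
  by move=> i hi; rewrite -(addn0 i); apply: Trunc_zero hH _; lia.
by move=> i hi; rewrite -(addn0 i); apply: Trunc_zero hH _.
Qed.

Lemma ub2 : (\dim X <= n4)%N.
Proof.
apply: (@dim_bound _ _ (Trunc q n4 (q - n4) *m GS n1 n2 n3 n4 GA GB)) => x hx hH.
apply: (@dec0 x 0 hx); rewrite mulmx0 addr0; apply: get_inj => n hn; rewrite get0.
rewrite -mulmxA in hH.
case: (leqP (q - n4) n) => c.
  have -> : n = (n - (q - n4) + (q - n4))%N by lia.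
  apply: Trunc_zero hH _; lia.
rewrite GS_split !Qpow_get !ifF ?addr0 //; lia.
Qed.

Definition Sh := Trunc q q (n2 - m).
Definition H3 := col_mx (Trunc q (n2 - m) 0)
   (Trunc q n3 0 *m GA *m (Qpow q (q - n1) + Qpow q (q - m) *m Sh)).

Lemma ub3 : (\dim X <= n2 - m + n3)%N.
Proof.
apply: (@dim_bound _ _ H3) => x hx /eqP; rewrite mul_col_mx col_mx_eq0.
case/andP => /eqP hT1 /eqP hT2.
apply: (@dec0 x (Sh *m x) hx).
have hu : Qpow q (q - n2) *m x + Qpow q (q - m) *m (Sh *m x) = 0.
  apply: get_inj => n hn; rewrite get0 getD !Qpow_get /Sh.
  case: (leqP (q - m) n) => c.
    rewrite ifT; last lia.
    rewrite andTb hn Trunc_get ifT; last lia.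
    have -> : (n - (q - m) + (n2 - m) = n - (q - n2))%N by lia.
    exact: F2_add_self.
  rewrite /= addr0; case: ifP => // d.
  rewrite -(addn0 (n - (q - n2))%N); apply: Trunc_zero hT1 _; lia.
set w := Qpow q (q - n1) *m x + Qpow q (q - m) *m (Sh *m x).
have hw : Qpow q (q - n3) *m (GA *m w) = 0.
  apply: Qpow_zero; first lia.
  move=> i hi; rewrite -(addn0 i); apply: Trunc_zero _ hi.
  by rewrite -hT2 /w -!mulmxA mulmxDl -mulmxA.
apply: get_inj => n hn; rewrite get0 getD GS_split GM_split.
rewrite addrACA -!getD -!mulmxDr -/w hu hw !mulmx0 addr0.
exact: get0.
Qed.

Lemma ub : (\dim X <= minn n1 (minn n4 (n2 + n3 - m)))%N.
Proof.
have := ub1; have := ub2; have := ub3; lia.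
Qed.
End UB.

Section Ach.
Variables (q n1 n2 n3 n4 m : nat).
Hypotheses (h1 : (n1 <= q)%N) (h2 : (n2 < n1)%N) (h3 : (n3 <= n4)%N) (h4 : (n4 <= q)%N) (hm : (m <= n2)%N).

Definition cc := minn n1 (minn n4 (n2 + n3 - m)).
Definition pinv i := if (i < tt0 n1 n2 n3 n4 m)%N then i else (i - (n1 - n3) + tt0 n1 n2 n3 n4 m)%N.
Definition gE i := if inJ n1 n2 n3 n4 m i then pinv i else cc.
Definition EE : 'M[F2]_(q, cc) := \matrix_(i < q, l < cc) ((l : nat) == gE i)%:R.
Definition XX := limg (linfun (mulmx EE : 'cV[F2]_cc -> 'cV[F2]_q)).

Lemma EE_get y n : get (EE *m y) n = if (n < q)%N then get y (gE n) else 0.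
Proof. by rewrite (@mulmx_sel _ _ gE) // => i j; rewrite mxE. Qed.

Lemma EE_inj (y : 'cV[F2]_cc) : EE *m y = 0 -> y = 0.
Proof.
move=> h; apply: get_inj => l hl; rewrite get0.
have hc : cc = (tt0 n1 n2 n3 n4 m + minn n1 n3)%N by rewrite /cc /tt0; lia.
have ht : (tt0 n1 n2 n3 n4 m <= n1 - n3)%N by rewrite /tt0; lia.
rewrite hc in hl.
set t := tt0 n1 n2 n3 n4 m in ht hl *.
have [p [hp hg]] : exists p, (p < q)%N /\ gE p = l.
  rewrite /gE /inJ /pinv -/t.
  case: (ltnP l t) => a.
    exists l; split; first lia.
    by rewrite a.
  exists (n1 - n3 + (l - t))%N; split; first lia.
  have e1 : (n1 - n3 + (l - t) < t)%N = false by apply/negbTE; rewrite -leqNgt; lia.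
  have e2 : (n1 - n3 <= n1 - n3 + (l - t))%N by lia.
  have e3 : (n1 - n3 + (l - t) < n1)%N by lia.
  rewrite e1 e2 e3 /=; lia.
have := EE_get y p; rewrite h get0 hp hg; by move=> ->.
Qed.

Lemma XX_dim : \dim XX = cc.
Proof. exact: dim_img EE_inj. Qed.

Lemma XX_supp x : x \in XX -> forall i, ~~ inJ n1 n2 n3 n4 m i -> get x i = 0.
Proof.
case/mem_img => y -> i hi; rewrite EE_get /gE (negbTE hi).
by case: ifP => // _; rewrite get_out.
Qed.

Lemma XX_dec : decodable n1 n2 n3 n4 m (GA0 q n3) (GB0 q n1 n2 n3 n4 m) XX.
Proof.
move=> xS xS' xM xM' hS hS'.
rewrite (GM0 h1 h2 h3 h4 hm xM) (GM0 h1 h2 h3 h4 hm xM') !addr0 => e.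
have : GS0 q n1 n2 n3 n4 m *m (xS - xS') = 0 by rewrite /GS0 mulmxBr e subrr.
move/(GS0_inj h1 h2 h3 h4 hm) => H.
apply/eqP; rewrite -subr_eq0; apply/eqP; apply: H.
move=> i hi; rewrite getB !(XX_supp hS hi, XX_supp hS' hi) subr0 //.
Qed.

Lemma achieve : is_rate n1 n2 n3 n4 m (GA0 q n3) (GB0 q n1 n2 n3 n4 m) cc.
Proof.
split; first by exists XX; split; [exact: XX_dec | exact: XX_dim].
move=> X hX; exact: (ub h1 h2 h3 h4 hm hX).
Qed.
End Ach.

Local Close Scope ring_scope.

Theorem mainTheorem6 (n1 n2 n3 n4 m : nat) :
  (n2 < n1)%N -> (n3 <= n4)%N -> (m <= n2)%N ->
  is_linear_capacity n1 n2 n3 n4 m (minn n1 (minn n4 (n2 + n3 - m))).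
Proof.
move=> h2 h3 hm.
have h1 : (n1 <= qdim n1 n2 n3 n4 m)%N by rewrite /qdim; lia.
have h4 : (n4 <= qdim n1 n2 n3 n4 m)%N by rewrite /qdim; lia.
split.
  by exists (GA0 _ n3), (GB0 _ n1 n2 n3 n4 m); exact: achieve.
move=> GA GB r [[X [hX <-]] _].
exact: (ub h1 h2 h3 h4 hm hX).
Qed.
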